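(* Let $g(q)\in\mathbb Z[q]$ and let $x_n,y_n$ ($n\ge1$) be indeterminates. Define elements $\mathsf S_n,\mathsf P_n,\mathsf I_n$ ($n\ge1$) of $\mathbb Q[q][x_d,y_d:d\ge1]$ recursively by the relations, for all $n\ge1$, $$\sum_{d|n}d\Big[\tfrac nd\Big]_{g(q)}\mathsf S_d^{\,n/d}=\sum_{d|n}d\Big[\tfrac nd\Big]_{g(q)}x_d^{\,n/d}+\sum_{d|n}d\Big[\tfrac nd\Big]_{g(q)}y_d^{\,n/d},$$ $$\sum_{d|n}d\Big[\tfrac nd\Big]_{g(q)}\mathsf P_d^{\,n/d}=(1-g(q))\Big(\sum_{d|n}d\Big[\tfrac nd\Big]_{g(q)}x_d^{\,n/d}\Big)\Big(\sum_{d|n}d\Big[\tfrac nd\Big]_{g(q)}y_d^{\,n/d}\Big),$$ $$\sum_{d|n}d\Big[\tfrac nd\Big]_{g(q)}x_d^{\,n/d}+\sum_{d|n}d\Big[\tfrac nd\Big]_{g(q)}\mathsf I_d^{\,n/d}=0.$$ Then for every $n\ge1$, $\mathsf S_n,\mathsf P_n\in\mathbb Z[g(q)][x_d,y_d:d\mid n]$ and $\mathsf I_n\in\mathbb Z[g(q)][x_d:d\mid n]$.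
   Context: For a polynomial $g(q)\in\mathbb Z[q]$ and a positive integer $n$, $[n]_{g(q)}:=1+g(q)+g(q)^2+\cdots+g(q)^{n-1}$. $\mathbb Z[g(q)]$ denotes the subring of $\mathbb Z[q]$ generated by $g(q)$. (The recursions determine $\mathsf S_n,\mathsf P_n,\mathsf I_n$ uniquely since the term with $d=n$ has coefficient $n$.) *)

(* Defs.v *)
From HB Require Import structures.
From mathcomp Require Import all_boot all_order all_algebra.
From mathcomp Require Import mpoly.
Set Implicit Arguments. Unset Strict Implicit. Unset Printing Implicit Defensive.
Import Order.TTheory GRing.Theory Num.Theory.
Local Open Scope ring_scope.

(* Truncation of Q[q][x_d, y_d : d >= 1] to the variables with d <= N:
   the polynomial ring over Q[q] = {poly rat} in N.*2.+2 indeterminates,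
   x_d is indeterminate number 2d and y_d is indeterminate number 2d+1
   (indeterminates 0 and 1 are unused). *)
Definition Ring (N : nat) := {mpoly {poly rat}[N.*2.+2]}.

Definition xv (N d : nat) : Ring N := 'X_(inord (d.*2)).
Definition yv (N d : nat) : Ring N := 'X_(inord (d.*2.+1)).

Definition gR (N : nat) (g : {poly int}) : Ring N :=
  (map_poly (fun z : int => z%:~R : rat) g)%:MP.

Definition qnum (N : nat) (h : Ring N) (m : nat) : Ring N :=
  \sum_(i < m) h ^+ i.

Definition ghost (N : nat) (h : Ring N) (a : nat -> Ring N) (n : nat) : Ring N :=
  \sum_(d <- divisors n) (d%:R * qnum h (n %/ d) * a d ^+ (n %/ d)).

Inductive in_subring (R : pzRingType) (G : R -> Prop) : R -> Prop :=
  | sub_gen r : G r -> in_subring G r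
  | sub_one : in_subring G 1
  | sub_add r s : in_subring G r -> in_subring G s -> in_subring G (r + s)
  | sub_opp r : in_subring G r -> in_subring G (- r)
  | sub_mul r s : in_subring G r -> in_subring G s -> in_subring G (r * s).

(* Main.v *)
Require Import Defs.
From HB Require Import structures.
From mathcomp Require Import all_boot all_order all_algebra.
From mathcomp Require Import mpoly.
From mathcomp Require Import ring zify.
Import Order.TTheory GRing.Theory Num.Theory.
Set Implicit Arguments. Unset Strict Implicit. Unset Printing Implicit Defensive.
Local Open Scope ring_scope.

Lemma sub0 (R : pzRingType) (G : R -> Prop) : in_subring G 0.
Proof. by rewrite -(subrr (1:R)); apply: sub_add; [exact: sub_one | apply: sub_opp; exact: sub_one]. Qed.

Lemma subB (R : pzRingType) (G : R -> Prop) r s :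
  in_subring G r -> in_subring G s -> in_subring G (r - s).
Proof. by move=> hr hs; apply: sub_add => //; exact: sub_opp. Qed.

Lemma subX (R : pzRingType) (G : R -> Prop) r k :
  in_subring G r -> in_subring G (r ^+ k).
Proof.
move=> hr; elim: k => [|k IH]; first by rewrite expr0; exact: sub_one.
by rewrite exprS; exact: sub_mul.
Qed.

Lemma subn (R : pzRingType) (G : R -> Prop) k : in_subring G (k%:R).
Proof.
elim: k => [|k IH]; first exact: sub0.
by rewrite -addn1 natrD; apply: sub_add => //; exact: sub_one.
Qed.

Lemma subz (R : pzRingType) (G : R -> Prop) (z : int) : in_subring G (z%:~R).
Proof. by case: z => k; [exact: subn | rewrite NegzE mulrNz; apply: sub_opp; exact: subn]. Qed.

Lemma sub_sum (R : pzRingType) (G : R -> Prop) (I : Type) (s : seq I) (P : pred I) F :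
  (forall i, P i -> in_subring G (F i)) -> in_subring G (\sum_(i <- s | P i) F i).
Proof. by move=> H; apply: (big_ind (in_subring G)) => //; [exact: sub0 | exact: sub_add]. Qed.

Definition mulB (R : pzRingType) (G : R -> Prop) (m : nat) (z : R) :=
  exists2 b, in_subring G b & z = m%:R * b.

Section MB.
Variable (R : comPzRingType) (G : R -> Prop).
Implicit Types (z w : R) (m : nat).

Lemma mulB0 m : mulB G m 0.
Proof. by exists 0; [exact: sub0 | rewrite mulr0]. Qed.

Lemma mulBD m z w : mulB G m z -> mulB G m w -> mulB G m (z + w).
Proof. by move=> [b hb ->] [c hc ->]; exists (b + c); [exact: sub_add | rewrite mulrDr]. Qed.

Lemma mulBN m z : mulB G m z -> mulB G m (- z).
Proof. by move=> [b hb ->]; exists (- b); [exact: sub_opp | rewrite mulrN]. Qed.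

Lemma mulBB m z w : mulB G m z -> mulB G m w -> mulB G m (z - w).
Proof. by move=> h1 h2; apply: mulBD => //; exact: mulBN. Qed.

Lemma mulBMr m z w : mulB G m z -> in_subring G w -> mulB G m (z * w).
Proof. by move=> [b hb ->] hw; exists (b * w); [exact: sub_mul | rewrite mulrA]. Qed.

Lemma mulBMl m z w : mulB G m z -> in_subring G w -> mulB G m (w * z).
Proof. by move=> h hw; rewrite mulrC; exact: mulBMr. Qed.

Lemma mulBMM m1 m2 z w : mulB G m1 z -> mulB G m2 w -> mulB G (m1 * m2) (z * w).
Proof.
move=> [b hb ->] [c hc ->]; exists (b * c); first exact: sub_mul.
by rewrite natrM -!mulrA; congr (_ * _); rewrite mulrCA.
Qed.

Lemma mulB_sub m z : mulB G m z -> in_subring G z.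
Proof. by move=> [b hb ->]; apply: sub_mul => //; exact: subn. Qed.

Lemma mulB_dvd m1 m2 z : (m1 %| m2)%N -> mulB G m2 z -> mulB G m1 z.
Proof.
move=> /dvdnP [t ->] [b hb ->]; exists (t%:R * b).
  by apply: sub_mul => //; exact: subn.
by rewrite natrM mulrA [_ * t%:R]mulrC.
Qed.

Lemma mulB_nat m1 m2 z : mulB G m2 z -> mulB G (m1 * m2) (m1%:R * z).
Proof. by move=> [b hb ->]; exists b => //; rewrite natrM mulrA. Qed.

Lemma mulB_sum m (I : Type) (s : seq I) (P : pred I) F :
  (forall i, P i -> mulB G m (F i)) -> mulB G m (\sum_(i <- s | P i) F i).
Proof. by move=> H; apply: (big_ind (mulB G m)) => //; [exact: mulB0 | exact: mulBD]. Qed.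

Lemma mulB1 z : in_subring G z -> mulB G 1 z.
Proof. by move=> h; exists z => //; rewrite mul1r. Qed.

Lemma mulB_coprime m1 m2 z : coprime m1 m2 -> mulB G m1 z -> mulB G m2 z ->
  mulB G (m1 * m2) z.
Proof.
move=> co [b hb eb] [c hc ec].
have [u [v euv]] := Bezoutz m1 m2.
have e1 : (u * m1%:Z + v * m2%:Z)%:~R = (1 : R).
  by rewrite euv /gcdz /=; move/eqP: co => ->.
rewrite rmorphD !rmorphM /= in e1.
exists (u%:~R * c + v%:~R * b).
  by apply: sub_add; apply: sub_mul => //; exact: subz.
rewrite -!pmulrn in e1.
rewrite natrM -[z]mul1r -{1}e1 mulrDl {1}ec eb; ring.
Qed.
End MB.

Lemma mulB_all (R : comPzRingType) (G : R -> Prop) (n : nat) z :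
  (0 < n)%N -> in_subring G z ->
  (forall p, prime p -> (p %| n)%N -> mulB G (p ^ logn p n) z) -> mulB G n z.
Proof.
elim: n {-2}n (leqnn n) => [|M IH] n.
  by rewrite leqn0 => /eqP ->.
move=> leM n0 hz H.
case: (ltngtP n 1) => [|lt1n|->]; last exact: mulB1.
  by rewrite ltnS leqn0 => /eqP e; rewrite e in n0.
have pp := pdiv_prime lt1n.
move: (pdiv n) (pdiv_dvd n) pp => p pdn pp.
have [m co en] := pfactor_coprime pp n0.
have m0 : (0 < m)%N by move: n0; rewrite en muln_gt0 => /andP[].
have k0 : (0 < logn p n)%N by rewrite logn_gt0 mem_primes pp n0 pdn.
have ltmn : (m < n)%N.
  rewrite [X in (_ < X)%N]en; apply: ltn_Pmulr => //.
  by have := ltn_exp2l 0 (logn p n) (prime_gt1 pp); rewrite expn0 => ->.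
have hm : mulB G m z.
  apply: (IH m) => //; first by rewrite -ltnS (leq_trans ltmn).
  move=> r rp rm.
  have rn : (r %| n)%N by rewrite en (dvdn_trans rm) // dvdn_mulr.
  have := H r rp rn.
  have rnp : r != p.
    apply/eqP => erp; move: co; rewrite prime_coprime // -erp rm //.
  have e0 : logn r (p ^ logn p n) = 0%N.
    by rewrite lognX (logn_prime r pp) (negbTE rnp) muln0.
  rewrite en lognM //; try by rewrite expn_gt0 prime_gt0.
  by rewrite e0 addn0.
have hp := H p pp pdn.
rewrite en; apply: mulB_coprime => //.
by rewrite coprime_sym coprimeXl.
Qed.

Section Frob.
Variables (R : comPzRingType) (G : R -> Prop) (psi : {rmorphism R -> R}) (p : nat).
Hypothesis pp : prime p.
Hypothesis hG : forall r, G r -> psi r = r ^+ p.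

Lemma psiB b : in_subring G b -> in_subring G (psi b).
Proof.
elim => {b} [r Gr||r s _ hr _ hs|r _ hr|r s _ hr _ hs].
- by rewrite hG //; apply: subX; exact: sub_gen.
- by rewrite rmorph1; exact: sub_one.
- by rewrite rmorphD; exact: sub_add.
- by rewrite rmorphN; exact: sub_opp.
- by rewrite rmorphM; exact: sub_mul.
Qed.

Lemma mulB_natmul m k x : (m %| k)%N -> in_subring G x -> mulB G m (x *+ k).
Proof.
move=> pk hx; apply: (@mulB_dvd _ _ m k) => //.
by exists x => //; rewrite mulr_natl.
Qed.

Lemma addXp r s : in_subring G r -> in_subring G s ->
  mulB G p ((r + s) ^+ p - r ^+ p - s ^+ p).
Proof.
move=> hr hs; move: pp; case: p => // p' pp'.
rewrite exprDn big_ord_recl big_ord_recr /= subn0 expr0 mulr1 bin0 mulr1n.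
rewrite subnn expr0 mul1r binn mulr1n.
have -> : forall a b c : R, a + (b + c) - a - c = b.
  by move=> a b c; ring.
apply: mulB_sum => i _; apply: mulB_natmul.
  apply: prime_dvd_bin => //.
  by rewrite /bump /= add1n ltnS (leq_trans (ltn_ord i)).
by apply: sub_mul; apply: subX.
Qed.

Lemma frob b : in_subring G b -> mulB G p (psi b - b ^+ p).
Proof.
elim => {b} [r Gr||r s hr1 hr hs1 hs|r hr1 hr|r s hr1 hr hs1 hs].
- by rewrite hG // subrr; exact: mulB0.
- by rewrite rmorph1 expr1n subrr; exact: mulB0.
- have -> : psi (r + s) - (r + s) ^+ p =
     (psi r - r ^+ p) + (psi s - s ^+ p) - ((r + s) ^+ p - r ^+ p - s ^+ p).
    by rewrite rmorphD; ring.
  by apply: mulBB; [apply: mulBD|exact: addXp].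
- rewrite rmorphN exprNn.
  case: (even_prime pp) => [p2|podd].
    have -> : - psi r - (-1) ^+ p * r ^+ p = - (psi r - r ^+ p) - p%:R * r ^+ p.
      by rewrite p2 expr2 mulrNN mul1r; ring.
    apply: mulBB; first exact: mulBN.
    by exists (r ^+ p) => //; exact: subX.
  have -> : - psi r - (-1) ^+ p * r ^+ p = - (psi r - r ^+ p).
    by rewrite -signr_odd podd expr1; ring.
  by apply: mulBN.
- have -> : psi (r * s) - (r * s) ^+ p =
     (psi r - r ^+ p) * psi s + r ^+ p * (psi s - s ^+ p).
    by rewrite rmorphM exprMn; ring.
  apply: mulBD; first by apply: mulBMr => //; exact: psiB.
  by apply: mulBMl => //; exact: subX.
Qed.

Lemma pow_ideal m x y t : in_subring G x -> in_subring G y ->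
  mulB G m (x - y) -> mulB G m (x ^+ t - y ^+ t).
Proof.
move=> hx hy h; rewrite subrXX; apply: mulBMr => //.
by apply: sub_sum => i _; apply: sub_mul; apply: subX.
Qed.

Lemma powp_step x y j : (0 < j)%N -> in_subring G x -> in_subring G y ->
  mulB G (p ^ j) (x - y) -> mulB G (p ^ j.+1) (x ^+ p - y ^+ p).
Proof.
move=> j0 hx hy h; rewrite subrXX expnSr; apply: mulBMM => //.
set c := y ^+ p.-1.
have -> : \sum_(i < p) x ^+ (p.-1 - i) * y ^+ i =
          \sum_(i < p) (x ^+ (p.-1 - i) * y ^+ i - c) + c *+ p.
  by rewrite sumrB sumr_const card_ord subrK.
apply: mulBD; last first.
  by apply: mulB_natmul => //; exact: subX.
apply: mulB_sum => i _.
have -> : x ^+ (p.-1 - i) * y ^+ i - c = (x ^+ (p.-1 - i) - y ^+ (p.-1 - i)) * y ^+ i.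
  rewrite mulrBl -exprD subnK //; rewrite -ltnS prednK ?prime_gt0 //.
apply: mulBMr; last exact: subX.
apply: pow_ideal => //; apply: (mulB_dvd _ h).
by rewrite -{1}(expn1 p) dvdn_exp2l.
Qed.

Lemma powp x y j e : (0 < j)%N -> in_subring G x -> in_subring G y ->
  mulB G (p ^ j) (x - y) -> mulB G (p ^ (j + e)) (x ^+ (p ^ e) - y ^+ (p ^ e)).
Proof.
move=> j0 hx hy h; elim: e => [|e IH]; first by rewrite addn0 expn0 !expr1.
rewrite addnS (expnSr p e) !exprM; apply: powp_step => //; first by rewrite addn_gt0 j0.
all: exact: subX.
Qed.

Lemma powt x y j t : (0 < j)%N -> (0 < t)%N -> in_subring G x -> in_subring G y ->
  mulB G (p ^ j) (x - y) -> mulB G (p ^ (j + logn p t)) (x ^+ t - y ^+ t).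
Proof.
move=> j0 t0 hx hy h.
have et : t = (p ^ logn p t * (t %/ p ^ logn p t))%N.
  by rewrite mulnC divnK // pfactor_dvdnn.
rewrite {2 3}et !exprM; apply: pow_ideal; try exact: subX.
exact: powp.
Qed.
End Frob.

Definition qn (A : pzRingType) (h : A) (m : nat) : A := \sum_(i < m) h ^+ i.
Definition gh (A : comPzRingType) (h : A) (a : nat -> A) (n : nat) : A :=
  \sum_(d <- divisors n) (d%:R * qn h (n %/ d) * a d ^+ (n %/ d)).
Definition upd (A : Type) (a : nat -> A) (n : nat) (v : A) : nat -> A :=
  fun m => if m == n then v else a m.

Lemma qn_add (A : pzRingType) (h : A) a b : qn h (a + b) = qn h a + h ^+ a * qn h b.
Proof.
rewrite /qn big_split_ord /=; congr (_ + _).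
by rewrite mulr_sumr; apply: eq_bigr => i _; rewrite exprD.
Qed.

Lemma qn1 (A : pzRingType) (h : A) : qn h 1 = 1.
Proof. by rewrite /qn big_ord1 expr0. Qed.

Lemma qn0 (A : pzRingType) (h : A) : qn h 0 = 0.
Proof. by rewrite /qn big_ord0. Qed.

Lemma qn_mul (A : comPzRingType) (h : A) p m : qn h (p * m) = qn h p * qn (h ^+ p) m.
Proof.
elim: m => [|m IH]; first by rewrite muln0 !qn0 mulr0.
rewrite mulnS addnC qn_add IH -addn1 qn_add qn1 -exprM mulnC; ring.
Qed.

Lemma qn_rmorph (A B : pzRingType) (f : {rmorphism A -> B}) h m : f (qn h m) = qn (f h) m.
Proof. by rewrite /qn rmorph_sum; apply: eq_bigr => i _; rewrite rmorphXn. Qed.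

Lemma qn_tel (A : pzRingType) (h : A) p : 1 - h ^+ p = (1 - h) * qn h p.
Proof. by rewrite -opprB subrX1 -mulNr opprB. Qed.

Lemma qnB (A : pzRingType) (G : A -> Prop) h m : in_subring G h -> in_subring G (qn h m).
Proof. by move=> hh; apply: sub_sum => i _; exact: subX. Qed.

Lemma gh_rmorph (A B : comPzRingType) (f : {rmorphism A -> B}) h a n :
  f (gh h a n) = gh (f h) (fun d => f (a d)) n.
Proof.
rewrite /gh rmorph_sum; apply: eq_bigr => d _.
by rewrite !rmorphM rmorph_nat qn_rmorph rmorphXn.
Qed.

Lemma gh0 (A : comPzRingType) h (a : nat -> A) : gh h a 0 = 0.
Proof. by rewrite /gh big1 // => d _; rewrite div0n qn0 mulr0 mul0r. Qed.

Lemma ghB (A : comPzRingType) (G : A -> Prop) h a n : in_subring G h ->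
  (forall d, (d %| n)%N -> in_subring G (a d)) -> in_subring G (gh h a n).
Proof.
move=> hh ha; case: n ha => [|n] ha; first by rewrite gh0; exact: sub0.
rewrite /gh big_seq; apply: sub_sum => d; rewrite -dvdn_divisors // => dn.
apply: sub_mul; last by apply: subX; exact: ha.
by apply: sub_mul; [exact: subn | exact: qnB].
Qed.

Lemma gh_eq (A : comPzRingType) h (a b : nat -> A) n :
  (forall d, (d %| n)%N -> a d = b d) -> gh h a n = gh h b n.
Proof.
case: n => [|n] H; first by rewrite !gh0.
rewrite /gh; apply: eq_big_seq => d; rewrite -dvdn_divisors // => dn.
by rewrite H.
Qed.

Lemma gh_upd (A : comPzRingType) h (a : nat -> A) n v : (0 < n)%N ->
  gh h (upd a n v) n = gh h (upd a n 0) n + n%:R * v.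
Proof.
move=> n0.
have nin : n \in divisors n by rewrite -dvdn_divisors.
rewrite /gh !(bigD1_seq n nin (divisors_uniq n)) /= /upd eqxx divnn n0 qn1 !expr1.
rewrite mulr0 add0r mulr1 addrC; congr (_ + _).
by apply: eq_bigr => i /negbTE ->.
Qed.

Lemma core (A : comPzRingType) (G : A -> Prop) (psi : {rmorphism A -> A}) (h : A)
    (p n : nat) (a : nat -> A) :
  prime p -> (0 < n)%N -> (p %| n)%N ->
  (forall r, G r -> psi r = r ^+ p) -> in_subring G h -> psi h = h ^+ p ->
  (forall d, (d %| n)%N -> in_subring G (a d)) ->
  mulB G (p ^ logn p n) (gh h a n - qn h p * psi (gh h a (n %/ p))).
Proof.
move=> pp n0 pn hG hh psih ha.
have p0 := prime_gt0 pp.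
have np0 : (0 < n %/ p)%N by rewrite divn_gt0 // dvdn_leq.
have eperm : perm_eq (divisors (n %/ p)) [seq d <- divisors n | (d * p %| n)%N].
  apply: uniq_perm; [exact: divisors_uniq | by rewrite filter_uniq // divisors_uniq|].
  move=> d; rewrite mem_filter -!dvdn_divisors // dvdn_divRL //.
  case dpn: (d * p %| n)%N => //=.
  by rewrite (dvdn_trans _ dpn) // dvdn_mulr.
rewrite gh_rmorph psih {2}/gh (perm_big _ eperm) big_filter big_distrr /=.
rewrite /gh (bigID (fun d => d * p %| n)%N) /= addrAC -sumrB.
apply: mulBD.
  rewrite big_seq_cond; apply: mulB_sum => d /andP [].
  rewrite -dvdn_divisors // => dn dpn.
  have d0 : (0 < d)%N by rewrite (dvdn_gt0 n0).
  set t := (n %/ p %/ d)%N.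
  have et : (t * (p * d))%N = n by rewrite /t -divnMA divnK // mulnC.
  have t0 : (0 < t)%N by move: n0; rewrite -et muln_gt0 => /andP [].
  have end_ : (n %/ d = p * t)%N by rewrite -et mulnA mulnK // mulnC.
  rewrite end_.
  have -> : d%:R * qn h (p * t) * a d ^+ (p * t) -
     qn h p * (d%:R * qn (h ^+ p) t * psi (a d) ^+ t) =
     d%:R * (qn h (p * t) * ((a d ^+ p) ^+ t - psi (a d) ^+ t)).
    by rewrite qn_mul -exprM; ring.
  set x := a d ^+ p; set y := psi (a d).
  have hx : in_subring G x by apply: subX; exact: ha dn.
  have hy : in_subring G y by apply: (psiB hG); exact: ha dn.
  have hxy : mulB G (p ^ 1) (x - y).
    rewrite expn1 -opprB; apply: mulBN; apply: (frob pp hG); exact: ha dn.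
  have H := mulBMl (powt pp (isT : (0 < 1)%N) t0 hx hy hxy) (qnB (p * t) hh).
  have ek : logn p n = (logn p d + (1 + logn p t))%N.
    rewrite -et mulnC lognM ?muln_gt0 ?p0 // lognM // (logn_prime p pp) eqxx /=.
    lia.
  rewrite ek expnD.
  have ed : d = (d %/ p ^ logn p d * p ^ logn p d)%N by rewrite divnK // pfactor_dvdnn.
  have -> : (d%:R : A) = (d %/ p ^ logn p d)%:R * (p ^ logn p d)%:R by rewrite -natrM -ed.
  rewrite -mulrA.
  apply: (@mulB_dvd _ _ _ (d %/ p ^ logn p d * (p ^ logn p d * p ^ (1 + logn p t)))%N).
    exact: dvdn_mull.
  by apply: mulB_nat; apply: mulB_nat.
rewrite big_seq_cond; apply: mulB_sum => d /andP [].
rewrite -dvdn_divisors // => dn ndpn.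
have d0 : (0 < d)%N by rewrite (dvdn_gt0 n0).
have pkd : (p ^ logn p n %| d)%N.
  have en : n = (d * (n %/ d))%N by rewrite mulnC divnK.
  have e0 : (0 < n %/ d)%N by rewrite divn_gt0 // dvdn_leq.
  have le0 : logn p (n %/ d) = 0%N.
    apply/eqP; rewrite -leqn0 leqNgt logn_gt0 mem_primes pp e0 /=.
    apply/negP => pe; move: ndpn; rewrite en.
    by rewrite dvdn_pmul2l // pe.
  by rewrite en lognM // le0 addn0 pfactor_dvdnn.
apply: (mulB_dvd pkd); rewrite -mulrA; exists (qn h (n %/ d) * a d ^+ (n %/ d)) => //.
apply: sub_mul; first exact: qnB.
by apply: subX; exact: ha dn.
Qed.

Lemma dwork (A : comPzRingType) (G : A -> Prop) (psi : nat -> {rmorphism A -> A})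
    (h : A) (c : nat -> A) :
  G h ->
  (forall p, prime p -> forall r, G r -> psi p r = r ^+ p) ->
  (forall n, (0 < n)%N -> in_subring G (c n)) ->
  (forall n p, (0 < n)%N -> prime p -> (p %| n)%N ->
     mulB G (p ^ logn p n) (c n - qn h p * psi p (c (n %/ p)%N))) ->
  forall M, exists a : nat -> A,
    forall n, (0 < n <= M)%N -> gh h a n = c n /\ in_subring G (a n).
Proof.
move=> Gh hpsi hc hcong; elim => [|M [a IH]].
  by exists (fun=> 0) => n /andP [n0]; rewrite leqNgt n0.
have n0 : (0 < M.+1)%N by [].
set n := M.+1 in n0 *.
set a0 := upd a n 0.
have ha0 : forall d, (d %| n)%N -> in_subring G (a0 d).
  move=> d dn; rewrite /a0 /upd; case: eqP => [_|ne]; first exact: sub0.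
  have d0 : (0 < d)%N := dvdn_gt0 n0 dn.
  have dle : (d <= n)%N := dvdn_leq n0 dn.
  have dM : (0 < d <= M)%N.
    rewrite d0 /= -ltnS; move: dle; rewrite leq_eqVlt => /orP [/eqP e|//].
    by case: (ne e).
  exact: (IH d dM).2.
have hagree : forall m, (0 < m <= M)%N -> gh h a0 m = gh h a m.
  move=> m /andP [m0 mM]; apply: gh_eq => d dm; rewrite /a0 /upd; case: eqP => // ed.
  by move: (dvdn_leq m0 dm); rewrite ed leqNgt ltnS mM.
set z := c n - gh h a0 n.
have hz : mulB G n z.
  apply: mulB_all => //.
    by apply: subB; [exact: hc | apply: ghB => //; exact: sub_gen].
  move=> p pp pn.
  have np0 : (0 < n %/ p)%N by rewrite divn_gt0 ?prime_gt0 // dvdn_leq.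
  have npM : (n %/ p <= M)%N by rewrite -ltnS ltn_Pdiv // prime_gt1.
  have e : c (n %/ p)%N = gh h a0 (n %/ p)%N.
    by rewrite hagree ?np0 // (IH _ _).1 // np0.
  have -> : z = (c n - qn h p * psi p (c (n %/ p)%N))
              - (gh h a0 n - qn h p * psi p (gh h a0 (n %/ p)%N)).
    by rewrite /z e; ring.
  apply: mulBB; first exact: hcong.
  apply: core => //; first exact: hpsi.
    exact: sub_gen.
  exact: hpsi.
case: hz => b hb ez.
exists (upd a n b) => m /andP [m0 mn].
case: (ltngtP m n) => [lt|gt|eq].
- have mM : (0 < m <= M)%N by rewrite m0 -ltnS.
  have neq : m != n by rewrite ltn_eqF.
  split; last by rewrite /upd (negbTE neq); exact: (IH m mM).2.
  rewrite -(IH m mM).1; apply: gh_eq => d dm; rewrite /upd; case: eqP => // ed.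
  by move: (dvdn_leq m0 dm); rewrite ed leqNgt lt.
- by move: mn; rewrite leqNgt gt.
- rewrite eq; split; last by rewrite /upd eqxx.
  by rewrite gh_upd // -ez /z addrC subrK.
Qed.

Lemma congS (A : comPzRingType) (G : A -> Prop) (psi : {rmorphism A -> A}) (h : A)
    (p n : nat) (X Y : nat -> A) :
  prime p -> (0 < n)%N -> (p %| n)%N ->
  (forall r, G r -> psi r = r ^+ p) -> G h ->
  (forall d, in_subring G (X d)) -> (forall d, in_subring G (Y d)) ->
  mulB G (p ^ logn p n) ((gh h X n + gh h Y n)
     - qn h p * psi (gh h X (n %/ p)%N + gh h Y (n %/ p)%N)).
Proof.
move=> pp n0 pn hG Gh hX hY.
have -> : forall u v u' v' : A, (u + v) - qn h p * psi (u' + v') =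
   (u - qn h p * psi u') + (v - qn h p * psi v').
  by move=> u v u' v'; rewrite rmorphD; ring.
by apply: mulBD; apply: core => //; try (exact: sub_gen); exact: hG.
Qed.

Lemma congI (A : comPzRingType) (G : A -> Prop) (psi : {rmorphism A -> A}) (h : A)
    (p n : nat) (X : nat -> A) :
  prime p -> (0 < n)%N -> (p %| n)%N ->
  (forall r, G r -> psi r = r ^+ p) -> G h ->
  (forall d, in_subring G (X d)) ->
  mulB G (p ^ logn p n) (- gh h X n - qn h p * psi (- gh h X (n %/ p)%N)).
Proof.
move=> pp n0 pn hG Gh hX.
rewrite rmorphN.
have -> : forall u w : A, - u - qn h p * (- w) = - (u - qn h p * w).
  by move=> u w; ring.
apply: mulBN.
by apply: core => //; try (exact: sub_gen); exact: hG.
Qed.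

Lemma congP (A : comPzRingType) (G : A -> Prop) (psi : {rmorphism A -> A}) (h : A)
    (p n : nat) (X Y : nat -> A) :
  prime p -> (0 < n)%N -> (p %| n)%N ->
  (forall r, G r -> psi r = r ^+ p) -> G h ->
  (forall d, in_subring G (X d)) -> (forall d, in_subring G (Y d)) ->
  mulB G (p ^ logn p n) ((1 - h) * gh h X n * gh h Y n
     - qn h p * psi ((1 - h) * gh h X (n %/ p)%N * gh h Y (n %/ p)%N)).
Proof.
move=> pp n0 pn hG Gh hX hY.
have hh : in_subring G h by exact: sub_gen.
rewrite !rmorphM rmorphB rmorph1 (hG h Gh) qn_tel.
set u := gh h X n; set v := gh h Y n.
set u' := psi (gh h X (n %/ p)%N); set v' := psi (gh h Y (n %/ p)%N).
have -> : (1 - h) * u * v - qn h p * ((1 - h) * qn h p * u' * v') =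
  (1 - h) * ((u - qn h p * u') * v + qn h p * u' * (v - qn h p * v')).
  by ring.
apply: mulBMl; last by apply: subB => //; exact: sub_one.
apply: mulBD.
  apply: mulBMr; first by apply: core => //; exact: hG.
  by apply: ghB.
apply: mulBMl; first by apply: core => //; exact: hG.
apply: sub_mul; first exact: qnB.
by apply: (psiB hG); apply: ghB.
Qed.

Lemma gh_split (A : comPzRingType) (h : A) (a : nat -> A) m : (0 < m)%N ->
  gh h a m = gh h (upd a m 0) m + m%:R * a m.
Proof.
move=> m0; rewrite -gh_upd //; apply: gh_eq => k _; rewrite /upd.
by case: (k =P m) => [->|].
Qed.

Lemma uniq_gh (A : idomainType) (h : A) (a b : nat -> A) n0 :
  (forall m, (0 < m)%N -> (m%:R : A) != 0) ->
  (0 < n0)%N -> (forall m, (m %| n0)%N -> gh h a m = gh h b m) ->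
  forall m, (m %| n0)%N -> a m = b m.
Proof.
move=> hch n0p H m; elim: m {-2}m (leqnn m) => [|M IH] m.
  by rewrite leqn0 => /eqP -> /(dvdn_gt0 n0p).
move=> le mn.
have m0 : (0 < m)%N := dvdn_gt0 n0p mn.
have e1 := gh_split h a m0.
have e2 := gh_split h b m0.
have e3 : gh h (upd a m 0) m = gh h (upd b m 0) m.
  apply: gh_eq => d dm; rewrite /upd; case: eqP => // /eqP ne.
  have dle := dvdn_leq m0 dm.
  apply: IH; last exact: dvdn_trans dm mn.
  by rewrite -ltnS (leq_trans _ le) // ltn_neqAle ne dle.
by have := H m mn; rewrite e1 e2 e3 => /addrI /(mulfI (hch m m0)).
Qed.

Lemma ev_sub (A B : pzRingType) (G1 : A -> Prop) (G2 : B -> Prop) (f : {rmorphism A -> B}) :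
  (forall r, G1 r -> in_subring G2 (f r)) -> forall b, in_subring G1 b -> in_subring G2 (f b).
Proof.
move=> H b; elim => {b} [r Gr||r s _ hr _ hs|r _ hr|r s _ hr _ hs].
- exact: H.
- by rewrite rmorph1; exact: sub_one.
- by rewrite rmorphD; exact: sub_add.
- by rewrite rmorphN; exact: sub_opp.
- by rewrite rmorphM; exact: sub_mul.
Qed.

Definition UK (N : nat) := {mpoly rat[N.*2.+2]}.
Definition var (N : nat) (i : nat) : UK N := 'X_(inord i).
Definition GS (N : nat) (r : UK N) := exists i, r = var N i.
Definition GI (N : nat) (r : UK N) := exists i, ~~ odd i /\ r = var N i.
Definition psiU (N p : nat) : {rmorphism UK N -> UK N} :=
  mmap (@mpolyC _ rat) (fun i => 'X_i ^+ p).
Definition fR (N : nat) : {rmorphism rat -> Ring N} := (@mpolyC _ _) \o (@polyC rat).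
Definition hev (N n0 : nat) (g : {poly int}) (i : 'I_(N.*2.+2)) : Ring N :=
  if nat_of_ord i == 0%N then gR N g
  else if ((nat_of_ord i)./2 %| n0)%N then
    (if odd i then yv N (nat_of_ord i)./2 else xv N (nat_of_ord i)./2)
  else 0.
Definition ev (N n0 : nat) (g : {poly int}) : {rmorphism UK N -> Ring N} :=
  mmap (fR N) (hev n0 g).

Lemma psiU_var N p i : psiU N p (var N i) = var N i ^+ p.
Proof. by rewrite /psiU /var /=  mmapX mmap1U. Qed.

Lemma ev_var N n0 g i : ev N n0 g (var N i) = hev n0 g (inord i).
Proof. by rewrite /ev /var /= mmapX mmap1U. Qed.

Lemma ev_h N n0 g : ev N n0 g (var N 0) = gR N g.
Proof. by rewrite ev_var /hev inordK. Qed.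

Lemma ev_x N n0 g d : (d %| n0)%N -> (0 < n0 <= N)%N -> ev N n0 g (var N d.*2) = xv N d.
Proof.
move=> dn /andP [n0p n0N]; rewrite ev_var /hev inordK; last first.
  by have := dvdn_leq n0p dn; lia.
have d0 : (0 < d)%N := dvdn_gt0 n0p dn.
have -> : (d.*2 == 0)%N = false by rewrite double_eq0 eqn0Ngt d0.
by rewrite doubleK dn odd_double.
Qed.

Lemma ev_y N n0 g d : (d %| n0)%N -> (0 < n0 <= N)%N -> ev N n0 g (var N d.*2.+1) = yv N d.
Proof.
move=> dn /andP [n0p n0N]; rewrite ev_var /hev inordK; last first.
  by have := dvdn_leq n0p dn; lia.
by rewrite /= uphalf_double dn odd_double.
Qed.

Lemma ev_GS N n0 g r : GS r ->
  in_subring (fun r => r = gR N g \/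
     exists d : nat, (d %| n0)%N /\ (r = xv N d \/ r = yv N d)) (ev N n0 g r).
Proof.
move=> [i ->]; rewrite ev_var /hev.
case: eqP => _; first by apply: sub_gen; left.
case: ifP => dn; last exact: sub0.
by apply: sub_gen; right; exists (nat_of_ord (inord i : 'I_(N.*2.+2)))./2; split => //; case: odd; [right|left].
Qed.

Lemma ev_GI N n0 g r : GI r ->
  in_subring (fun r => r = gR N g \/
     exists d : nat, (d %| n0)%N /\ r = xv N d) (ev N n0 g r).
Proof.
move=> [i [ei ->]]; rewrite ev_var /hev.
have ev0 : ~~ odd (inord i : 'I_(N.*2.+2)).
  by rewrite /inord /insubd val_insubd; case: ifP.
case: eqP => _; first by apply: sub_gen; left.
case: ifP => dn; last exact: sub0.
rewrite (negbTE ev0).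
by apply: sub_gen; right; exists (nat_of_ord (inord i : 'I_(N.*2.+2)))./2.
Qed.

Lemma transfer N n0 g (a c : nat -> UK N) (T : nat -> Ring N) :
  (0 < n0 <= N)%N ->
  (forall m, (0 < m <= N)%N -> gh (var N 0) a m = c m) ->
  (forall m, (m %| n0)%N -> gh (gR N g) T m = ev N n0 g (c m)) ->
  T n0 = ev N n0 g (a n0).
Proof.
move=> hn0 ha hT; have /andP [n0p n0N] := hn0.
have hch : forall m, (0 < m)%N -> (m%:R : Ring N) != 0.
  move=> m m0.
  have -> : (m%:R : Ring N) = ((m%:R : rat)%:P)%:MP by rewrite -[RHS]/(fR N m%:R) rmorph_nat.
  by rewrite mpolyC_eq0 polyC_eq0 pnatr_eq0 -lt0n.
apply: (@uniq_gh _ (gR N g) T (fun m => ev N n0 g (a m)) n0 hch n0p _ n0 (dvdnn n0)) => m mn.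
have m0 : (0 < m)%N := dvdn_gt0 n0p mn.
have mN : (0 < m <= N)%N by rewrite m0 (leq_trans (dvdn_leq n0p mn)).
by rewrite hT // -ha // gh_rmorph ev_h.
Qed.

Lemma trS (A B : comPzRingType) (f : {rmorphism A -> B}) h h' (X Y : nat -> A)
    (x y : nat -> B) m :
  f h = h' -> (forall d, (d %| m)%N -> f (X d) = x d) ->
  (forall d, (d %| m)%N -> f (Y d) = y d) ->
  f (gh h X m + gh h Y m) = gh h' x m + gh h' y m.
Proof.
move=> eh ex ey; rewrite rmorphD !gh_rmorph eh.
by congr (_ + _); apply: gh_eq.
Qed.

Lemma trP (A B : comPzRingType) (f : {rmorphism A -> B}) h h' (X Y : nat -> A)
    (x y : nat -> B) m :
  f h = h' -> (forall d, (d %| m)%N -> f (X d) = x d) ->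
  (forall d, (d %| m)%N -> f (Y d) = y d) ->
  f ((1 - h) * gh h X m * gh h Y m) = (1 - h') * gh h' x m * gh h' y m.
Proof.
move=> eh ex ey; rewrite !rmorphM rmorphB rmorph1 !gh_rmorph eh.
by congr (_ * _ * _); apply: gh_eq.
Qed.

Lemma trI (A B : comPzRingType) (f : {rmorphism A -> B}) h h' (X : nat -> A)
    (x : nat -> B) m :
  f h = h' -> (forall d, (d %| m)%N -> f (X d) = x d) ->
  f (- gh h X m) = - gh h' x m.
Proof.
move=> eh ex; rewrite rmorphN !gh_rmorph eh.
by congr (- _); apply: gh_eq.
Qed.

Unset Implicit Arguments.
Theorem lemma3p3 (g : {poly int}) (N : nat) (S P I : nat -> Ring N) :
  (forall n : nat, (0 < n <= N)%N ->
     ghost (gR N g) S n = ghost (gR N g) (xv N) n + ghost (gR N g) (yv N) n) ->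
  (forall n : nat, (0 < n <= N)%N ->
     ghost (gR N g) P n
     = (1 - gR N g) * ghost (gR N g) (xv N) n * ghost (gR N g) (yv N) n) ->
  (forall n : nat, (0 < n <= N)%N ->
     ghost (gR N g) (xv N) n + ghost (gR N g) I n = 0) ->
  forall n : nat, (0 < n <= N)%N ->
    [/\ in_subring (fun r => r = gR N g \/
                      exists d : nat, (d %| n)%N /\ (r = xv N d \/ r = yv N d)) (S n),
        in_subring (fun r => r = gR N g \/
                      exists d : nat, (d %| n)%N /\ (r = xv N d \/ r = yv N d)) (P n)
      & in_subring (fun r => r = gR N g \/
                      exists d : nat, (d %| n)%N /\ r = xv N d) (I n)].
Proof.
move=> hS hP hI n0 hn0; have /andP [n0p n0N] := hn0.
set X := fun d => var N d.*2.
set Y := fun d => var N d.*2.+1.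
set hU := var N 0.
have GSh : GS hU by exists 0%N.
have GIh : GI hU by exists 0%N.
have hpsiS : forall p, prime p -> forall r, GS r -> psiU N p r = r ^+ p.
  by move=> p _ r [i ->]; exact: psiU_var.
have hpsiI : forall p, prime p -> forall r, GI r -> psiU N p r = r ^+ p.
  by move=> p _ r [i [_ ->]]; exact: psiU_var.
have XS : forall d, in_subring (@GS N) (X d) by move=> d; apply: sub_gen; exists d.*2.
have YS : forall d, in_subring (@GS N) (Y d) by move=> d; apply: sub_gen; exists d.*2.+1.
have XI : forall d, in_subring (@GI N) (X d).
  by move=> d; apply: sub_gen; exists d.*2; rewrite odd_double.
have [aS haS] := dwork (psi := psiU N) (c := fun n => gh hU X n + gh hU Y n) GSh hpsiS
  (fun n _ => sub_add (ghB (sub_gen GSh) (fun d _ => XS d)) (ghB (sub_gen GSh) (fun d _ => YS d)))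
  (fun n p n0 pp pn => congS pp n0 pn (hpsiS p pp) GSh XS YS) N.
have [aP haP] := dwork (psi := psiU N) (c := fun n => (1 - hU) * gh hU X n * gh hU Y n)
  GSh hpsiS
  (fun n _ => sub_mul (sub_mul (subB (sub_one _) (sub_gen GSh)) (ghB (sub_gen GSh) (fun d _ => XS d)))
      (ghB (sub_gen GSh) (fun d _ => YS d)))
  (fun n p n0 pp pn => congP pp n0 pn (hpsiS p pp) GSh XS YS) N.
have [aI haI] := dwork (psi := psiU N) (c := fun n => - gh hU X n) GIh hpsiI
  (fun n _ => sub_opp (ghB (sub_gen GIh) (fun d _ => XI d)))
  (fun n p n0 pp pn => congI pp n0 pn (hpsiI p pp) GIh XI) N.
have hmN : forall m, (m %| n0)%N -> (0 < m <= N)%N.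
  move=> m mn; have m0 : (0 < m)%N := dvdn_gt0 n0p mn.
  by rewrite m0 (leq_trans (dvdn_leq n0p mn)).
have eS : S n0 = ev N n0 g (aS n0).
  apply: (@transfer N n0 g aS (fun n => gh hU X n + gh hU Y n) S hn0).
    by move=> m mN; have := (haS m mN).1; move=> ->.
  move=> m mn.
  have e : gh (gR N g) S m = gh (gR N g) (xv N) m + gh (gR N g) (yv N) m
    := hS m (hmN m mn).
  rewrite e; symmetry.
  apply: trS; first exact: ev_h.
    by move=> d dm; apply: ev_x => //; exact: dvdn_trans dm mn.
  by move=> d dm; apply: ev_y => //; exact: dvdn_trans dm mn.
have eP : P n0 = ev N n0 g (aP n0).
  apply: (@transfer N n0 g aP (fun n => (1 - hU) * gh hU X n * gh hU Y n) P hn0).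
    by move=> m mN; have := (haP m mN).1; move=> ->.
  move=> m mn.
  have e : gh (gR N g) P m = (1 - gR N g) * gh (gR N g) (xv N) m * gh (gR N g) (yv N) m
    := hP m (hmN m mn).
  rewrite e; symmetry.
  apply: trP; first exact: ev_h.
    by move=> d dm; apply: ev_x => //; exact: dvdn_trans dm mn.
  by move=> d dm; apply: ev_y => //; exact: dvdn_trans dm mn.
have eI : I n0 = ev N n0 g (aI n0).
  apply: (@transfer N n0 g aI (fun n => - gh hU X n) I hn0).
    by move=> m mN; have := (haI m mN).1; move=> ->.
  move=> m mn.
  have -> : gh (gR N g) I m = - gh (gR N g) (xv N) m.
    have e : gh (gR N g) (xv N) m + gh (gR N g) I m = 0 := hI m (hmN m mn).
    by apply: (addrI (gh (gR N g) (xv N) m)); rewrite e subrr.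
  symmetry; apply: trI; first exact: ev_h.
  by move=> d dm; apply: ev_x => //; exact: dvdn_trans dm mn.
split.
- rewrite eS; apply: ev_sub; first exact: ev_GS.
  exact: (haS n0 hn0).2.
- rewrite eP; apply: ev_sub; first exact: ev_GS.
  exact: (haP n0 hn0).2.
- rewrite eI; apply: ev_sub; first exact: ev_GI.
  exact: (haI n0 hn0).2.
Qed.
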